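(* Let $m\ge2$, $n\ge1$ and $\mathcal{A}=(a_{i_1i_2\cdots i_m})\in\mathbb{R}_+^{[m,n]}$ with $r_i(\mathcal{A})\neq0$ for all $i\in[n]$. Then \[\min_{i\in[n]}\frac{r_i(\mathcal{A}^2)}{(r_i(\mathcal{A}))^{m-1}}\le\rho(\mathcal{A})\le\max_{i\in[n]}\frac{r_i(\mathcal{A}^2)}{(r_i(\mathcal{A}))^{m-1}}.\]
   Context: $[n]=\{1,\ldots,n\}$. $\mathbb{R}_+^{[m,n]}$ denotes the set of order $m$, dimension $n$ tensors $\mathcal{A}=(a_{i_1\cdots i_m})$, $i_j\in[n]$, with nonnegative real entries. For a tensor $\mathcal{T}=(t_{i_1\cdots i_p})$ of order $p$ and dimension $n$, $r_i(\mathcal{T})=\sum_{i_2,\ldots,i_p=1}^n|t_{ii_2\cdots i_p}|$. $\mathcal{A}^2=\mathcal{A}\mathcal{A}$ is the general product: for $\mathcal{A}$ of order $m$ and $\mathcal{B}$ of order $k$, $\mathcal{A}\mathcal{B}=(c_{i\alpha_1\cdots\alpha_{m-1}})$ is the order $(m-1)(k-1)+1$, dimension $n$ tensor with $c_{i\alpha_1\cdots\alpha_{m-1}}=\sum_{i_2,\ldots,i_m=1}^n a_{ii_2\cdots i_m}b_{i_2\alpha_1}\cdots b_{i_m\alpha_{m-1}}$, $i\in[n]$, $\alpha_j\in[n]^{k-1}$ (where $b_{j\alpha}$ with $\alpha=(j_2,\ldots,j_k)$ means $b_{jj_2\cdots j_k}$). Eigenvalues: $\lambda\in\mathbb{C}$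 is an eigenvalue of $\mathcal{A}$ if there is a nonzero $x\in\mathbb{C}^n$ with $\sum_{i_2,\ldots,i_m=1}^n a_{ii_2\cdots i_m}x_{i_2}\cdots x_{i_m}=\lambda x_i^{m-1}$ for all $i\in[n]$; $\rho(\mathcal{A})$ is the maximum modulus of the eigenvalues of $\mathcal{A}$. *)

(* Defs.v *)
From HB Require Import structures.
From mathcomp Require Import all_boot all_order all_algebra.
From mathcomp Require Import zify.
From mathcomp Require Import classical_sets reals.
From mathcomp Require Import complex.
Set Implicit Arguments. Unset Strict Implicit. Unset Printing Implicit Defensive.
Import Order.TTheory GRing.Theory Num.Theory.
Local Open Scope ring_scope.

(* An order m, dimension n tensor T = (t_{i_1 ... i_m}) (m >= 1), stored as
   T i (i_2,...,i_m), i.e. the first index is separated from the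
   (m-1)-tuple of the remaining indices. *)
Definition tensor (R : Type) (m n : nat) := 'I_n -> (m.-1).-tuple 'I_n -> R.

Definition rsum (R : numDomainType) (p n : nat) (T : tensor R p n) (i : 'I_n) : R :=
  \sum_(t : (p.-1).-tuple 'I_n) `|T i t|.

Lemma blk_idx_proof (a b : nat) (j : 'I_a) (l : 'I_b) : (j * b + l < a * b)%N.
Proof.
have hj := ltn_ord j; have hl := ltn_ord l.
have : (j.+1 * b <= a * b)%N by rewrite leq_mul2r hj orbT.
rewrite mulSn; lia.
Qed.
Definition blk_idx (a b : nat) (j : 'I_a) (l : 'I_b) : 'I_(a * b) :=
  Ordinal (blk_idx_proof j l).

(* alpha = (alpha_1, ..., alpha_a), each alpha_j in [n]^b; block j returns alpha_(j+1) *)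
Definition block (n a b : nat) (alpha : (a * b).-tuple 'I_n) (j : 'I_a) : b.-tuple 'I_n :=
  [tuple tnth alpha (blk_idx j l) | l < b].

(* General product: A of order m, B of order k; AB has order (m-1)(k-1)+1 and
   c_{i alpha_1 ... alpha_{m-1}} =
     sum_{i_2..i_m} a_{i i_2 .. i_m} b_{i_2 alpha_1} ... b_{i_m alpha_{m-1}}. *)
Definition tprod (R : pzSemiRingType) (m k n : nat) (A : tensor R m n) (B : tensor R k n)
  : tensor R ((m.-1) * (k.-1)).+1 n :=
  fun i alpha =>
    \sum_(s : (m.-1).-tuple 'I_n)
       A i s * \prod_(j < m.-1) B (tnth s j) (block alpha j).

Definition tsquare (R : pzSemiRingType) (m n : nat) (A : tensor R m n) :=
  tprod A A.

Definition cmod (R : rcfType) (z : R[i]) : R :=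
  Num.sqrt (complex.Re z ^+ 2 + complex.Im z ^+ 2).

Definition teigenvalue (R : rcfType) (m n : nat) (A : tensor R m n) (lambda : R[i]) : Prop :=
  exists x : 'I_n -> R[i],
    (exists j, x j != 0) /\
    forall i : 'I_n,
      \sum_(s : (m.-1).-tuple 'I_n) (A i s)%:C%C * \prod_(j < m.-1) x (tnth s j)
      = lambda * x i ^+ (m.-1).

(* spectral radius: the largest modulus of the eigenvalues (the set of moduli
   is finite and nonempty, so its supremum is its maximum) *)
Definition spectral_radius (R : realType) (m n : nat) (A : tensor R m n) : R :=
  sup [set cmod lambda | lambda in [set l | teigenvalue A l]].

(* minimum and maximum of f over [n], n >= 1 (the seed f 0 is itself a value) *)
Definition fmin (R : realDomainType) (n : nat) (hn : (0 < n)%N) (f : 'I_n -> R) : R :=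
  \big[Order.min/f (Ordinal hn)]_(i < n) f i.
Definition fmax (R : realDomainType) (n : nat) (hn : (0 < n)%N) (f : 'I_n -> R) : R :=
  \big[Order.max/f (Ordinal hn)]_(i < n) f i.

(* Main.v *)
Require Import Defs.
From HB Require Import structures.
From mathcomp Require Import all_boot all_order all_algebra.
From mathcomp Require Import classical_sets reals complex.
From mathcomp Require Import lra ring.
From mathcomp Require Import boolp topology normedtype.
Import Order.TTheory GRing.Theory Num.Theory.
Import numFieldNormedType.Exports.
Local Open Scope ring_scope.

Set Implicit Arguments. Unset Strict Implicit. Unset Printing Implicit Defensive.

Definition Gt (R : pzSemiRingType) n p (B : 'I_n -> p.-tuple 'I_n -> R)
  (y : 'I_n -> R) (i : 'I_n) : R :=
  \sum_(s : p.-tuple 'I_n) B i s * \prod_(j < p) y (tnth s j).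

Lemma sum_tuple_prod (R : numDomainType) (T : finType) p (F : 'I_p -> T -> R) :
  \sum_(s : p.-tuple T) \prod_(j < p) F j (tnth s j) = \prod_(j < p) \sum_(t : T) F j t.
Proof.
rewrite bigA_distr_bigA /=.
rewrite (reindex (fun s : p.-tuple T => [ffun j => tnth s j])) /=.
  by apply: eq_bigr => s _; apply: eq_bigr => j _; rewrite ffunE.
apply: onW_bij; exists (fun f : {ffun 'I_p -> T} => [tuple f j | j < p]).
  by move=> s; apply: eq_from_tnth => j; rewrite tnth_mktuple ffunE.
by move=> f; apply/ffunP => j; rewrite ffunE tnth_mktuple.
Qed.

Lemma block_sum (R : numDomainType) n p (F : 'I_p -> p.-tuple 'I_n -> R) :
  \sum_(a : (p * p).-tuple 'I_n) \prod_(j < p) F j (block a j)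
  = \prod_(j < p) \sum_(t : p.-tuple 'I_n) F j t.
Proof.
rewrite -sum_tuple_prod.
rewrite (reindex (fun a : (p * p).-tuple 'I_n => [tuple block a j | j < p])) /=.
  by apply: eq_bigr => a _; apply: eq_bigr => j _; rewrite tnth_mktuple.
apply: onW_bij; apply: inj_card_bij; last first.
  by rewrite !card_tuple !card_ord expnM.
move=> a b hab; apply: eq_from_tnth => k.
have : (0 < p * p)%N := leq_ltn_trans (leq0n _) (ltn_ord k).
rewrite muln_gt0 => /andP [hp _].
have hj : (k %/ p < p)%N by rewrite ltn_divLR.
have hl : (k %% p < p)%N by rewrite ltn_pmod.
have -> : k = blk_idx (Ordinal hj) (Ordinal hl).
  by apply: val_inj => /=; rewrite -divn_eq.
have := congr1 (fun S => tnth (tnth S (Ordinal hj)) (Ordinal hl)) hab.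
by rewrite /= !tnth_mktuple.
Qed.

Lemma rsum_nonneg (R : numDomainType) m n (A : tensor R m n) i :
  (forall t, 0 <= A i t) -> rsum A i = \sum_t A i t.
Proof. by move=> h; apply: eq_bigr => t _; rewrite ger0_norm. Qed.

Lemma rsum_tsquare (R : numDomainType) m n (A : tensor R m n)
  (hA : forall i t, 0 <= A i t) i :
  rsum (tsquare A) i = Gt A (rsum A) i.
Proof.
rewrite /rsum /tsquare /tprod /Gt /=.
transitivity (\sum_(a : ((m.-1) * (m.-1)).-tuple 'I_n) \sum_(s : (m.-1).-tuple 'I_n)
   A i s * \prod_(j < m.-1) A (tnth s j) (block a j)).
  apply: eq_bigr => a _; rewrite ger0_norm //.
  by apply: sumr_ge0 => s _; apply: mulr_ge0 => //; apply: prodr_ge0.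
rewrite exchange_big /=; apply: eq_bigr => s _.
rewrite -mulr_sumr; congr (_ * _).
rewrite (block_sum (fun j t => A (tnth s j) t)).
by apply: eq_bigr => j _; apply: eq_bigr => t _; rewrite ger0_norm.
Qed.
Lemma prod_cst (R : pzSemiRingType) p (t : R) : \prod_(j < p) t = t ^+ p.
Proof. by elim: p => [|p IH]; rewrite ?big_ord0 ?expr0 // big_ord_recr /= IH exprSr. Qed.

Lemma normCE (R : rcfType) (z : R[i]) : `|z| = (cmod z)%:C%C.
Proof. by rewrite normc_def. Qed.

Lemma cmodR (R : rcfType) (a : R) : cmod (a%:C)%C = `|a|.
Proof. by rewrite /cmod /= expr0n /= addr0 sqrtr_sqr. Qed.

Lemma cmod_ge0 (R : rcfType) (z : R[i]) : 0 <= cmod z.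
Proof. exact: sqrtr_ge0. Qed.

Lemma cmod_eq0 (R : rcfType) (z : R[i]) : (cmod z == 0) = (z == 0).
Proof.
by rewrite -[z == 0]normr_eq0 normCE -(rmorph0 (real_complex R)) (inj_eq (@complexI R)).
Qed.

Lemma eig_bound (R : realType) m n (A : tensor R m n)
  (hA : forall i t, 0 <= A i t) (hr : forall i, 0 < rsum A i) (lam : R[i]) :
  teigenvalue A lam ->
  exists i, cmod lam <= rsum (tsquare A) i / rsum A i ^+ (m.-1).
Proof.
move=> [x [[i0 hx0] heq]].
set p := m.-1 in heq *.
pose w j := cmod (x j).
pose r j := rsum A j.
have [i _ himax] := @arg_maxP _ R _ i0 xpredT (fun j => w j / r j) isT.
exists i.
set t := w i / r i.
have hw0 : 0 < w i0 by rewrite lt_def cmod_eq0 hx0 cmod_ge0.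
have ht : 0 < t.
  by apply: (lt_le_trans _ (himax i0 isT)); rewrite divr_gt0.
have hwj j : w j <= t * r j.
  by have := himax j isT; rewrite /= -/t ler_pdivrMr.
have hwi : w i = t * r i by rewrite /t divfK // gt_eqF.
have key : (cmod lam * w i ^+ p)%:C%C
    <= (\sum_(s : p.-tuple 'I_n) A i s * \prod_(j < p) w (tnth s j))%:C%C.
  have -> : (cmod lam * w i ^+ p)%:C%C = `|lam * x i ^+ p|.
    by rewrite normrM normrX !normCE rmorphM rmorphXn.
  rewrite -heq rmorph_sum /=.
  apply: (le_trans (ler_norm_sum _ _ _)); rewrite le_eqVlt; apply/orP; left.
  apply/eqP; apply: eq_bigr => s _.
  rewrite normrM normr_prod normCE cmodR ger0_norm // rmorphM rmorph_prod /=.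
  by congr (_ * _); apply: eq_bigr => j _; rewrite normCE.
rewrite lecR in key.
have key2 : cmod lam * w i ^+ p <= t ^+ p * rsum (tsquare A) i.
  apply: (le_trans key); rewrite rsum_tsquare // /Gt mulr_sumr.
  apply: ler_sum => s _; rewrite mulrCA; apply: ler_wpM2l => //.
  rewrite -prod_cst -big_split /=.
  apply: ler_prod => j _; rewrite cmod_ge0 /=; exact: hwj.
rewrite hwi exprMn mulrCA in key2.
rewrite ler_pdivlMr ?exprn_gt0 //.
by rewrite -(ler_pM2l (exprn_gt0 p ht)).
Qed.

Section Helpers.
Variables (R : realType) (n p : nat).
Implicit Types (B : 'I_n -> p.-tuple 'I_n -> R) (y z : 'I_n -> R).

Definition simplex y := (forall i, 0 <= y i) /\ \sum_i y i = 1.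

Lemma simplex_le1 y i : simplex y -> y i <= 1.
Proof.
move=> [h0 h1]; rewrite -h1 (bigD1 i) //= lerDl.
by apply: sumr_ge0 => j _; exact: h0.
Qed.

Lemma simplex_pos y : simplex y -> exists l, 0 < y l.
Proof.
move=> [h0 h1]; apply/existsP; apply: contraT => /existsPn h.
have : \sum_i y i <= \sum_(i : 'I_n) (0 : R).
  by apply: ler_sum => i _; have := h i; rewrite -leNgt.
by rewrite big1_eq h1 ler10.
Qed.

Lemma Gt_ge0 B y i : (forall i s, 0 <= B i s) -> (forall j, 0 <= y j) -> 0 <= Gt B y i.
Proof.
move=> hB hy; apply: sumr_ge0 => s _; apply: mulr_ge0 => //.
by apply: prodr_ge0 => j _.
Qed.

Lemma Gt_mono B y z i : (forall i s, 0 <= B i s) -> (forall j, 0 <= y j <= z j) ->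
  Gt B y i <= Gt B z i.
Proof.
move=> hB hyz; apply: ler_sum => s _; apply: ler_wpM2l => //.
by apply: ler_prod => j _.
Qed.

Lemma Gt_scale B y (a : R) i : Gt B (fun j => a * y j) i = a ^+ p * Gt B y i.
Proof.
rewrite /Gt mulr_sumr; apply: eq_bigr => s _.
by rewrite big_split /= prod_cst mulrCA.
Qed.

Lemma sum_prod_tuple y : \sum_(s : p.-tuple 'I_n) \prod_(j < p) y (tnth s j) = (\sum_i y i) ^+ p.
Proof.
rewrite (sum_tuple_prod (fun _ t => y t)).
by rewrite prod_cst.
Qed.

Lemma Gt_addc B y (e : R) i :
  Gt (fun i s => B i s + e) y i = Gt B y i + e * (\sum_j y j) ^+ p.
Proof.
rewrite /Gt -sum_prod_tuple mulr_sumr -big_split /=.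
by apply: eq_bigr => s _; rewrite mulrDl.
Qed.

Lemma arch (a b : R) : (forall k : nat, a <= b + (k.+1)%:R^-1) -> a <= b.
Proof.
move=> h; apply/ler_addgt0Pr => e he.
have he' : 0 <= e^-1 by rewrite invr_ge0 ltW.
have := archi_boundP he'; set k := Num.Def.archi_bound _ => hk.
apply: (le_trans (h k)); rewrite lerD2l.
rewrite -[e]invrK lef_pV2 ?posrE ?invr_gt0 //.
by apply: (le_trans (ltW hk)); rewrite ler_nat.
Qed.

End Helpers.

Section Topo.
Local Open Scope classical_set_scope.
Variables (R : realType) (n : nat).
Local Notation V := 'rV[R]_n.

Lemma nested (C : nat -> set V) :
  (forall k, closed (C k)) ->
  (forall k y, C k y -> forall i, 0 <= y ord0 i <= 1) ->
  (forall k, exists y, forall j, (j <= k)%N -> C j y) ->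
  exists y, forall k, C k y.
Proof.
move=> hcl hK hne.
pose K := [set v : V | forall i, `[(0:R), 1]%classic (v ord0 i)].
have cK : compact K := @rV_compact R n (fun _ => `[(0:R), 1]%classic) (fun _ => @segment_compact R 0 1).
move: cK; rewrite compact_In0 => /(_ nat setT (fun k => K `&` C k)) [].
- by exists C => // k _.
- move=> D _.
  have [y hy] := hne (\max_(j <- finmap.enum_fset D) j)%N.
  exists y => i /= hi; split; last by apply: hy; exact: leq_bigmax_seq.
  move=> l; have := hK _ _ (hy 0%N (leq0n _)) l.
  by rewrite /= in_itv.
- by move=> y hy; exists y => k; have [] := hy k I.
Qed.

Lemma closed_le_fun (f g : V -> R) : continuous f -> continuous g ->
  closed [set v | f v <= g v].
Proof.
move=> hf hg.
have -> : [set v | f v <= g v] = (fun v => g v - f v) @^-1` [set x | 0 <= x].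
  by apply/seteqP; split => v /=; rewrite subr_ge0.
apply: preimage_closed; last exact: closed_ge.
by move=> v _; exact: (continuousB (hg v) (hf v)).
Qed.

Lemma closed_eq_fun (f g : V -> R) : continuous f -> continuous g ->
  closed [set v | f v = g v].
Proof.
move=> hf hg.
have -> : [set v | f v = g v] = (fun v => g v - f v) @^-1` [set x | x = 0].
  by apply/seteqP; split => v /=; [move->; rewrite subrr|move/eqP; rewrite subr_eq0 => /eqP].
apply: preimage_closed; last exact: closed_eq.
by move=> v _; exact: (continuousB (hg v) (hf v)).
Qed.

Lemma closed_forall (P : 'I_n -> set V) : (forall i, closed (P i)) ->
  closed [set v | forall i, P i v].
Proof.
move=> h.
have -> : [set v | forall i, P i v] = \bigcap_(i in setT) P i.
  by apply/seteqP; split => v /= hv i //; apply: hv.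
by apply: closed_bigI => i _.
Qed.

Lemma closed_and (P Q : set V) : closed P -> closed Q -> closed [set v | P v /\ Q v].
Proof. move=> hP hQ; exact: closedI. Qed.

Lemma cont_coord i : continuous (fun v : V => v ord0 i).
Proof. exact: coord_continuous. Qed.

Lemma cont_Gt p (B : 'I_n -> p.-tuple 'I_n -> R) i :
  continuous (fun v : V => Gt B (v ord0) i).
Proof.
rewrite /Gt.
apply: continuous_big; first exact: add_continuous.
move=> s _ v; apply: continuousM; first exact: cst_continuous.
apply: continuous_big; first exact: mul_continuous.
move=> j _; exact: cont_coord.
Qed.

Lemma cont_sum : continuous (fun v : V => \sum_i v ord0 i).
Proof.
apply: continuous_big; first exact: add_continuous.
move=> j _; exact: cont_coord.
Qed.

End Topo.

Section Step.
Local Open Scope classical_set_scope.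
Variables (R : realType) (n p : nat).
Hypothesis hp : (0 < p)%N.
Local Notation V := 'rV[R]_n.

Lemma rowK (y : 'I_n -> R) : (\row_i y i : V) ord0 = y.
Proof. by apply/funext => i; rewrite mxE. Qed.

Lemma pow_mono (a b : R) q : 0 <= a -> a <= b -> a ^+ q <= b ^+ q.
Proof. by move=> ha hab; rewrite -!prod_cst; apply: ler_prod => j _; rewrite ha. Qed.

Lemma cont_pow i q : continuous (fun v : V => v ord0 i ^+ q).
Proof.
elim: q => [|q IH]; first exact: cst_continuous.
have -> : (fun v : V => v ord0 i ^+ q.+1) = (fun v => v ord0 i * v ord0 i ^+ q).
  by apply/funext => v; rewrite exprS.
by move=> v; exact: (continuousM (@cont_coord _ _ i v) (IH v)).
Qed.

Lemma closed_simplex : closed [set v : V | simplex (v ord0)].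
Proof.
apply: (@closed_and _ _ [set v : V | forall i, 0 <= v ord0 i]
                         [set v : V | \sum_i v ord0 i = 1]).
- apply: closed_forall => i; apply: closed_le_fun; [exact: cst_continuous|exact: cont_coord].
- apply: closed_eq_fun; [exact: cont_sum|exact: cst_continuous].
Qed.


Lemma step1 (B : 'I_n -> p.-tuple 'I_n -> R) (hB : forall i s, 0 < B i s)
  (c : R) (z : 'I_n -> R) (hz : simplex z) (hc : forall i, c * z i ^+ p <= Gt B z i) :
  exists y lam, simplex y /\ c <= lam /\ forall i, Gt B y i = lam * y i ^+ p.
Proof.
have hB0 i s : 0 <= B i s by exact: ltW.
pose S := [set nu : R | exists y, simplex y /\ forall i, nu * y i ^+ p <= Gt B y i].
have cS : S c by exists z.
pose M := \sum_i \sum_(s : p.-tuple 'I_n) B i s.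
have ubS : ubound S M.
  move=> nu [y [hy hnu]].
  have [l hl] := simplex_pos hy.
  have [i _ himax] := @arg_maxP _ R _ l xpredT y isT.
  have hyi : 0 < y i := lt_le_trans hl (himax l isT).
  have h1 : Gt B y i <= (\sum_s B i s) * y i ^+ p.
    rewrite /Gt mulr_suml; apply: ler_sum => s _; apply: ler_wpM2l => //.
    rewrite -prod_cst; apply: ler_prod => j _; rewrite hy.1 /=; exact: himax.
  have h2 : \sum_s B i s <= M.
    rewrite /M (bigD1 i) //= lerDl; apply: sumr_ge0 => j _.
    by apply: sumr_ge0 => s _; exact: hB0.
  rewrite -(ler_pM2r (exprn_gt0 p hyi)); apply: (le_trans (hnu i)).
  apply: (le_trans h1); apply: ler_wpM2r => //; exact: exprn_ge0 (ltW hyi).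
have hsup : has_sup S by split; [exists c | exists M].
set mu := sup S.
have cmu : c <= mu := sup_upper_bound hsup cS.
have seqk k : exists y, simplex y /\
    forall i, mu * y i ^+ p <= Gt B y i + (k.+1)%:R^-1.
  have he : 0 < (k.+1)%:R^-1 :> R by rewrite invr_gt0 ltr0Sn.
  have [nu [y [hy hnu]] hlt] := sup_adherent he hsup.
  exists y; split => // i.
  have hY0 : 0 <= y i ^+ p := exprn_ge0 _ (hy.1 i).
  have hY1 : y i ^+ p <= 1 := exprn_ile1 _ (hy.1 i) (simplex_le1 _ hy).
  have h1 : (mu - (k.+1)%:R^-1) * y i ^+ p <= nu * y i ^+ p.
    by rewrite ler_wpM2r // ltW.
  have h2 : (k.+1)%:R^-1 * y i ^+ p <= (k.+1)%:R^-1 :> R.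
    exact: ler_piMr (ltW he) hY1.
  have h3 := hnu i.
  rewrite -[mu](subrK ((k.+1)%:R^-1)) mulrDl; apply: lerD => //; exact: le_trans h1 h3.
pose C k := [set v : V | simplex (v ord0) /\
  forall i, mu * v ord0 i ^+ p <= Gt B (v ord0) i + (k.+1)%:R^-1].
have hclC k : closed (C k).
  apply: (@closed_and _ _ [set v : V | simplex (v ord0)]
    [set v : V | forall i, mu * v ord0 i ^+ p <= Gt B (v ord0) i + (k.+1)%:R^-1]).
    exact: closed_simplex.
  apply: closed_forall => i; apply: closed_le_fun.
    by move=> v; exact: (continuousM (@cst_continuous _ _ mu v) (@cont_pow i p v)).
  by move=> v; exact: (continuousD (@cont_Gt _ _ _ B i v) (@cst_continuous _ _ _ v)).
have hne k : exists y, forall j, (j <= k)%N -> C j y.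
  have [y [hy hyk]] := seqk k.
  exists (\row_i y i) => j hj; rewrite /C /= rowK; split => // i.
  apply: (le_trans (hyk i)); rewrite lerD2l lef_pV2 ?posrE ?ltr0Sn //.
  by rewrite ler_nat ltnS.
have hK k v : C k v -> forall i, 0 <= v ord0 i <= 1.
  by move=> [hv _] i; rewrite hv.1 /=; exact: simplex_le1.
have [v hv] := nested hclC hK hne.
set y := v ord0.
have hy : simplex y by have [] := hv 0%N.
have hyle i : mu * y i ^+ p <= Gt B y i.
  by apply: arch => k; have [_] := hv k; exact.
exists y, mu; split => //; split => //.
have [/forallP hall|/forallPn [k hk]] := boolP [forall i, Gt B y i == mu * y i ^+ p].
  by move=> i; apply/eqP.
exfalso.
have hkl : mu * y k ^+ p < Gt B y k by rewrite lt_neqAle hyle andbT eq_sym.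
set dl := Gt B y k - mu * y k ^+ p.
have hdl : 0 < dl by rewrite subr_gt0.
have hyk0 : 0 <= y k := hy.1 k.
pose D := \sum_(l < p) (y k + 1) ^+ (p.-1 - l) * (y k + 1) ^+ l.
have hD : 0 <= D.
  by apply: sumr_ge0 => l _; apply: mulr_ge0; apply: exprn_ge0; lra.
pose t := Order.min 1 (dl / (`|mu| * D + 1)).
have hmD : 0 < `|mu| * D + 1.
  have : 0 <= `|mu| * D by rewrite mulr_ge0.
  lra.
have ht0 : 0 < t by rewrite lt_min ltr01 divr_gt0.
have ht1 : t <= 1 by rewrite ge_min lexx.
have htd : t <= dl / (`|mu| * D + 1) by rewrite ge_min lexx orbT.
pose zz := fun j => y j + (if j == k then t else 0).
have hzz j : 0 <= y j <= zz j.
  rewrite hy.1 /= /zz lerDl; case: ifP => _ //; exact: ltW.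
have hzk : zz k = y k + t by rewrite /zz eqxx.
have hzj j : j != k -> zz j = y j by move/negbTE => h; rewrite /zz h addr0.
pose sk := [tuple k | _ < p].
have hprod (w : 'I_n -> R) : \prod_(j < p) w (tnth sk j) = w k ^+ p.
  by rewrite -prod_cst; apply: eq_bigr => j _; rewrite tnth_mktuple.
have hinc i : Gt B y i < Gt B zz i.
  rewrite -subr_gt0 /Gt -sumrB (bigD1 sk) //=.
  have h0 : 0 <= \sum_(s | s != sk)
      (B i s * \prod_(j < p) zz (tnth s j) - B i s * \prod_(j < p) y (tnth s j)).
    apply: sumr_ge0 => s _; rewrite subr_ge0 ler_wpM2l //.
    by apply: ler_prod => j _; exact: hzz.
  have h1 : 0 < B i sk * \prod_(j < p) zz (tnth sk j)
                - B i sk * \prod_(j < p) y (tnth sk j).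
    rewrite !hprod -mulrBr mulr_gt0 // subr_gt0 hzk (ltrXn2r _ hyk0) -?lt0n //.
    lra.
  lra.
have hstrict i : mu * zz i ^+ p < Gt B zz i.
  case: (eqVneq i k) => [->|hik]; last first.
    by rewrite hzj //; exact: le_lt_trans (hyle i) (hinc i).
  apply: (lt_trans _ (hinc k)).
  have e1 : zz k ^+ p - y k ^+ p <= t * D.
    rewrite subrXX hzk (addrC (y k) t) addrK.
    apply: ler_wpM2l; first exact: ltW.
    apply: ler_sum => l _; apply: ler_pM.
    - by apply: exprn_ge0; lra.
    - exact: exprn_ge0.
    - by apply: pow_mono; lra.
    - by apply: pow_mono; lra.
  have e0 : 0 <= zz k ^+ p - y k ^+ p.
    by rewrite subr_ge0; apply: pow_mono => //; have := hzz k; case/andP.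
  have e2 : mu * (zz k ^+ p - y k ^+ p) <= `|mu| * (t * D).
    apply: (le_trans (ler_wpM2r e0 (ler_norm mu))).
    by apply: ler_wpM2l => //; exact: normr_ge0.
  have e3 : t * (`|mu| * D + 1) <= dl by rewrite -ler_pdivlMr.
  have e4 : t * (`|mu| * D + 1) = `|mu| * (t * D) + t by ring.
  rewrite e4 in e3.
  have e5 : mu * zz k ^+ p = mu * y k ^+ p + mu * (zz k ^+ p - y k ^+ p) by ring.
  rewrite e5; rewrite /dl in e3; lra.
pose e i := (Gt B zz i - mu * zz i ^+ p) / (zz i ^+ p + 1).
have hZ0 i : 0 <= zz i ^+ p by apply: exprn_ge0; have := hzz i; case/andP => h1 h2; lra.
have hd : 0 < \big[Order.min/1]_i e i.
  apply: lt_bigmin => // i _; rewrite divr_gt0 // ?subr_gt0 ?hstrict //.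
  by have := hZ0 i; lra.
set d := \big[Order.min/1]_i e i in hd.
have hnu i : (mu + d) * zz i ^+ p <= Gt B zz i.
  have hde : d <= e i := bigmin_le _ _ _.
  have hg : 0 <= Gt B zz i - mu * zz i ^+ p by rewrite subr_ge0 ltW.
  have h1 : e i * zz i ^+ p <= Gt B zz i - mu * zz i ^+ p.
    rewrite /e mulrAC ler_pdivrMr; last by have := hZ0 i; lra.
    by apply: ler_wpM2l => //; lra.
  have h2 : d * zz i ^+ p <= e i * zz i ^+ p by apply: ler_wpM2r.
  rewrite mulrDl; lra.
set sg := \sum_j zz j.
have hsg : 0 < sg.
  apply: (lt_le_trans ltr01); rewrite -hy.2; apply: ler_sum => j _.
  by have := hzz j; case/andP.
pose w := fun j => sg^-1 * zz j.
have hw : simplex w.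
  split.
    move=> j; apply: mulr_ge0; first by rewrite invr_ge0 ltW.
    by have := hzz j; case/andP => h1 h2; lra.
  by rewrite /w -mulr_sumr mulVf // gt_eqF.
have : S (mu + d).
  exists w; split => // i.
  rewrite Gt_scale /w exprMn mulrCA; apply: ler_wpM2l; last exact: hnu.
  by apply: exprn_ge0; rewrite invr_ge0 ltW.
move/(sup_upper_bound hsup); rewrite -/mu; lra.
Qed.

Lemma step2 (A : 'I_n -> p.-tuple 'I_n -> R) (hA : forall i s, 0 <= A i s)
  (c : R) (z : 'I_n -> R) (hz : simplex z) (hc : forall i, c * z i ^+ p <= Gt A z i) :
  exists y lam, simplex y /\ c <= lam /\ forall i, Gt A y i = lam * y i ^+ p.
Proof.
have seqk k : exists y, simplex y /\
    (forall i l, Gt A y i * y l ^+ p - Gt A y l * y i ^+ p <= (k.+1)%:R^-1) /\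
    (forall i, c * y i ^+ p <= Gt A y i + (k.+1)%:R^-1).
  have he : 0 < (k.+1)%:R^-1 :> R by rewrite invr_gt0 ltr0Sn.
  move: (k.+1)%:R^-1 he => ee he.
  pose B := fun i s => A i s + ee.
  have hB i s : 0 < B i s by rewrite /B; have := hA i s; lra.
  have hcB i : c * z i ^+ p <= Gt B z i.
    rewrite /B Gt_addc hz.2 expr1n mulr1; have := hc i; lra.
  have [y [lam [hy [hcl heq]]]] := step1 hB hz hcB.
  have heq' i : Gt A y i + ee = lam * y i ^+ p.
    by rewrite -heq /B Gt_addc hy.2 expr1n mulr1.
  exists y; split => //; split.
    move=> i l.
    have hYi0 : 0 <= y i ^+ p := exprn_ge0 _ (hy.1 i).
    have hYl0 : 0 <= y l ^+ p := exprn_ge0 _ (hy.1 l).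
    have hYi1 : y i ^+ p <= 1 := exprn_ile1 _ (hy.1 i) (simplex_le1 _ hy).
    have -> : Gt A y i = lam * y i ^+ p - ee by rewrite -heq' addrK.
    have -> : Gt A y l = lam * y l ^+ p - ee by rewrite -heq' addrK.
    have -> : (lam * y i ^+ p - ee) * y l ^+ p - (lam * y l ^+ p - ee) * y i ^+ p
            = ee * y i ^+ p - ee * y l ^+ p by ring.
    have : 0 <= ee * y l ^+ p by rewrite mulr_ge0 // ltW.
    have : ee * y i ^+ p <= ee := ler_piMr (ltW he) hYi1.
    lra.
  move=> i; rewrite heq'; apply: ler_wpM2r => //; exact: exprn_ge0 (hy.1 i).
pose C k := [set v : V | simplex (v ord0) /\
  ((forall i l, Gt A (v ord0) i * v ord0 l ^+ p - Gt A (v ord0) l * v ord0 i ^+ p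
     <= (k.+1)%:R^-1) /\
  (forall i, c * v ord0 i ^+ p <= Gt A (v ord0) i + (k.+1)%:R^-1))].
have hclC k : closed (C k).
  apply: (@closed_and _ _ [set v : V | simplex (v ord0)]); first exact: closed_simplex.
  apply: (@closed_and _ _
    [set v : V | forall i l, Gt A (v ord0) i * v ord0 l ^+ p - Gt A (v ord0) l * v ord0 i ^+ p
     <= (k.+1)%:R^-1]
    [set v : V | forall i, c * v ord0 i ^+ p <= Gt A (v ord0) i + (k.+1)%:R^-1]).
    apply: closed_forall => i; apply: closed_forall => l; apply: closed_le_fun;
      last exact: cst_continuous.
    move=> v; exact: (continuousB
      (continuousM (@cont_Gt _ _ _ A i v) (@cont_pow l p v))
      (continuousM (@cont_Gt _ _ _ A l v) (@cont_pow i p v))).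
  apply: closed_forall => i; apply: closed_le_fun.
    by move=> v; exact: (continuousM (@cst_continuous _ _ c v) (@cont_pow i p v)).
  by move=> v; exact: (continuousD (@cont_Gt _ _ _ A i v) (@cst_continuous _ _ _ v)).
have hne k : exists y, forall j, (j <= k)%N -> C j y.
  have [y [hy [hyk1 hyk2]]] := seqk k.
  have hej : forall j, (j <= k)%N -> (k.+1)%:R^-1 <= (j.+1)%:R^-1 :> R.
    by move=> j hj; rewrite lef_pV2 ?posrE ?ltr0Sn // ler_nat ltnS.
  exists (\row_i y i) => j hj; rewrite /C /= rowK; split => //; split => i.
    by move=> l; apply: (le_trans (hyk1 i l)); exact: hej.
  by apply: (le_trans (hyk2 i)); rewrite lerD2l; exact: hej.
have hK k v : C k v -> forall i, 0 <= v ord0 i <= 1.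
  by move=> [hv _] i; rewrite hv.1 /=; exact: simplex_le1.
have [v hv] := nested hclC hK hne.
set y := v ord0.
have hy : simplex y by have [] := hv 0%N.
have hprop i l : Gt A y i * y l ^+ p <= Gt A y l * y i ^+ p.
  rewrite -subr_le0; apply: arch => k; rewrite add0r.
  by have [_ [h _]] := hv k; exact: h.
have hcy i : c * y i ^+ p <= Gt A y i.
  by apply: arch => k; have [_ [_ h]] := hv k; exact: h.
have [l hl] := simplex_pos hy.
have hYl : 0 < y l ^+ p := exprn_gt0 _ hl.
exists y, (Gt A y l / y l ^+ p); split => //; split.
  by rewrite ler_pdivlMr.
move=> i; apply: (mulIf (lt0r_neq0 hYl)).
rewrite mulrAC divfK ?(lt0r_neq0 hYl) //.
by apply/eqP; rewrite eq_le hprop hprop.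
Qed.

End Step.

Unset Implicit Arguments.

Theorem theorem3p2 (R : realType) (m n : nat) (A : tensor R m n)
  (hm : (2 <= m)%N) (hn : (1 <= n)%N)
  (hA : forall (i : 'I_n) (t : (m.-1).-tuple 'I_n), 0 <= A i t)
  (hr : forall i : 'I_n, rsum A i != 0) :
  fmin hn (fun i => rsum (tsquare A) i / rsum A i ^+ (m.-1)) <= spectral_radius A
  /\ spectral_radius A <= fmax hn (fun i => rsum (tsquare A) i / rsum A i ^+ (m.-1)).
Proof.
have hp : (0 < m.-1)%N by case: m hm A hA hr => [|[|k]].
have hr0 i : 0 < rsum A i.
  by rewrite lt_def hr /=; apply: sumr_ge0 => t _; exact: normr_ge0.
set f := fun i => rsum (tsquare A) i / rsum A i ^+ (m.-1).
have hfmax i : f i <= fmax hn f := le_bigmax _ _ _.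
have hfmin i : fmin hn f <= f i := bigmin_le _ _ _.
have hf0 i : 0 <= f i.
  rewrite /f divr_ge0 //; last exact: exprn_ge0 (ltW (hr0 i)).
  by apply: sumr_ge0 => t _; exact: normr_ge0.
rewrite /spectral_radius.
set E := [set cmod lambda | lambda in [set l | teigenvalue A l]]%classic.
have ubE : ubound E (fmax hn f).
  move=> e [lam hlam <-]; have [i hi] := eig_bound hA hr0 hlam.
  exact: le_trans hi (hfmax i).
split; last first.
  case: (pselect (E !=set0)%classic) => hE.
    exact: ge_sup hE ubE.
  have -> : E = set0.
    by apply/seteqP; split => x hx //; exfalso; apply: hE; exists x.
  by rewrite sup0; exact: le_trans (hf0 (Ordinal hn)) (hfmax _).
set c := fmin hn f.
pose sg := \sum_i rsum A i.
have hsg : 0 < sg.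
  apply: (lt_le_trans (hr0 (Ordinal hn))); rewrite /sg (bigD1 (Ordinal hn)) //= lerDl.
  by apply: sumr_ge0 => j _; exact: ltW.
pose zz := fun j => sg^-1 * rsum A j.
have hz : simplex zz.
  split.
    by move=> j; apply: mulr_ge0; [rewrite invr_ge0 ltW | exact: ltW].
  by rewrite /zz -mulr_sumr mulVf // gt_eqF.
have hcz i : c * zz i ^+ (m.-1) <= Gt A zz i.
  rewrite /zz Gt_scale exprMn mulrCA; apply: ler_wpM2l.
    by apply: exprn_ge0; rewrite invr_ge0 ltW.
  rewrite -rsum_tsquare //.
  by have := hfmin i; rewrite /f ler_pdivlMr // exprn_gt0.
have [y [lam [hy [hcl heq]]]] := step2 hp hA hz hcz.
have hlamE : E (cmod (lam%:C)%C).
  exists (lam%:C)%C => //; exists (fun j => (y j)%:C%C); split.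
    have [l hl] := simplex_pos hy; exists l.
    by rewrite -(rmorph0 (real_complex R)) (inj_eq (@complexI R)) gt_eqF.
  move=> i; rewrite -rmorphXn -rmorphM -heq /Gt rmorph_sum.
  by apply: eq_bigr => s _; rewrite rmorphM rmorph_prod.
have hsupE : has_sup E by split; [exists (cmod (lam%:C)%C) | exists (fmax hn f)].
apply: (le_trans _ (sup_upper_bound hsupE hlamE)).
by rewrite cmodR; exact: le_trans hcl (ler_norm lam).
Qed.
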